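(* Let $k\ge2$, $\omega>0$, $\chi>0$, and let $a_1,\dots,a_k$ be periodic functions $a_l(t)=\sum_{m\in\mathbb{Z}}A^{(l)}(m)e^{im\omega t}$ whose Fourier coefficients satisfy $|A^{(l)}(m)|\le\alpha_l\frac{e^{-\chi|m|}}{\langle m\rangle^2}$ for all $m\in\mathbb{Z}$ and $l=1,\dots,k$, where $\alpha_l>0$. Then there is a positive constant $\beta_k$ such that the Fourier coefficients $\mathcal{R}_k(a_1|\cdots|a_k)(m)$, $m\in\mathbb{Z}$, of $\mathcal{R}_k(a_1|\cdots|a_k)_t$ satisfy $$|\mathcal{R}_k(a_1|\cdots|a_k)(m)|\le\beta_k\,\alpha_1\cdots\alpha_k\,\frac{e^{-\chi|m|}}{\langle m\rangle^2}.$$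
   Context: $\langle m\rangle:=|m|$ for $m\neq0$, $\langle0\rangle:=1$. For periodic (quasi-periodic) $h$, $M(h)=\lim_{T\to\infty}\frac1{2T}\int_{-T}^Th(t)dt$. Notation $(f|g)_t:=f(t)\int_0^tg(\tau)d\tau$. Renormalisation operators: $\mathcal{R}_1a_1:=a_1$; $\mathcal{R}_2(a_1|a_2)_t:=a_1(t)\int_0^t(a_2(\tau)-M(a_2))d\tau$; for $n>2$, $\mathcal{R}_n(a_1|\cdots|a_n)_t:=\left(a_1\,\big|\,\mathcal{R}_{n-1}(a_2|\cdots|a_n)-M(\mathcal{R}_{n-1}(a_2|\cdots|a_n))\right)_t$; these are periodic with frequency $\omega$ when the $a_l$ are. *)

(* Defs.v *)
From Stdlib Require Import Reals ZArith List.
From Coquelicot Require Import Coquelicot.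
Open Scope R_scope.

Definition cexpi (th : R) : C := (cos th, sin th).

Definition bracket (m : Z) : R :=
  if Z.eqb m 0 then 1 else IZR (Z.abs m).

Definition sym_psum (N : nat) (f : Z -> C) : C :=
  fold_right Cplus (RtoC 0)
    (map (fun j : nat => f (Z.of_nat j - Z.of_nat N)%Z) (seq 0 (2 * N + 1))).

(* h(t) = sum_{m in Z} A(m) e^{i m omega t} (pointwise, symmetric partial sums) *)
Definition has_fourier_series (omega : R) (A : Z -> C) (h : R -> C) : Prop :=
  forall t : R,
    filterlim (fun N : nat => sym_psum N (fun m => Cmult (A m) (cexpi (IZR m * omega * t))))
      eventually (locally (h t)).

Definition Mean (h : R -> C) : C :=
  (real (Lim (fun T => / (2 * T) * RInt (fun s => Re (h s)) (- T) T) p_infty),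
   real (Lim (fun T => / (2 * T) * RInt (fun s => Im (h s)) (- T) T) p_infty)).

Definition bar (f g : R -> C) : R -> C :=
  fun t => Cmult (f t) (@RInt C_R_CompleteNormedModule g 0 t).

(* R_n(a_1|...|a_n): R_1 a = a, R_n(a_1|rest) = (a_1 | R_{n-1} rest - M(R_{n-1} rest)).
   For n = 2 this is exactly a_1(t) int_0^t (a_2 - M(a_2)). *)
Fixpoint Renorm (l : list (R -> C)) : R -> C :=
  match l with
  | nil => fun _ => RtoC 0
  | a :: nil => a
  | a :: ((_ :: _) as l') =>
      let g := Renorm l' in bar a (fun s => Cminus (g s) (Mean g))
  end.

Definition fcoef (omega : R) (h : R -> C) (m : Z) : C :=
  Cmult (RtoC (omega / (2 * PI)))
    (@RInt C_R_CompleteNormedModule (fun t => Cmult (h t) (cexpi (- (IZR m * omega * t)))) 0 (2 * PI / omega)).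

(* Main.v *)
Require Import Defs.
From Stdlib Require Import Reals ZArith List.
From Coquelicot Require Import Coquelicot.
From Stdlib Require Import Lia Lra FunctionalExtensionality.
Open Scope R_scope.

Lemma C_eta (z : C) : z = (Re z, Im z).
Proof. destruct z; reflexivity. Qed.

Lemma cont_Re (f : R -> C) x : continuous f x -> continuous (fun t => Re (f t)) x.
Proof. intros H. apply (continuous_comp f (fun z : C => fst z)). exact H.
  destruct (f x) as [u v]. apply (continuous_fst (U:=R_UniformSpace) (V:=R_UniformSpace)). Qed.
Lemma cont_Im (f : R -> C) x : continuous f x -> continuous (fun t => Im (f t)) x.
Proof. intros H. apply (continuous_comp f (fun z : C => snd z)). exact H.
  destruct (f x) as [u v]. apply (continuous_snd (U:=R_UniformSpace) (V:=R_UniformSpace)). Qed.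

Lemma cont_pair (f : R -> C) x : continuous (fun t => Re (f t)) x -> continuous (fun t => Im (f t)) x -> continuous f x.
Proof. intros H1 H2.
  apply continuous_ext with (f := fun t => ((Re (f t), Im (f t)) : C)). intros; now rewrite <- C_eta.
  apply (continuous_comp_2 (fun t => Re (f t)) (fun t => Im (f t)) (fun u v => (u,v) : C)); auto.
  intros P HP. unfold filtermap. simpl in *. revert HP. apply filter_imp. intros [u v] h; exact h.
Qed.

Definition Cont (f : R -> C) := forall x, continuous f x.

Lemma cont_Cmult (f g : R -> C) x : continuous f x -> continuous g x -> continuous (fun t => Cmult (f t) (g t)) x.
Proof. intros Hf Hg. apply cont_pair; simpl.
  - apply (continuous_minus (fun t => Re (f t) * Re (g t)) (fun t => Im (f t) * Im (g t)));
    apply (continuous_mult (K:=R_AbsRing)); auto using cont_Re, cont_Im.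
  - apply (continuous_plus (fun t => Re (f t) * Im (g t)) (fun t => Im (f t) * Re (g t)));
    apply (continuous_mult (K:=R_AbsRing)); auto using cont_Re, cont_Im.
Qed.

Lemma cont_Cplus (f g : R -> C) x : continuous f x -> continuous g x -> continuous (fun t => Cplus (f t) (g t)) x.
Proof. intros Hf Hg. apply cont_pair; simpl.
  - apply (continuous_plus (fun t => Re (f t)) (fun t => Re (g t))); auto using cont_Re, cont_Im.
  - apply (continuous_plus (fun t => Im (f t)) (fun t => Im (g t))); auto using cont_Re, cont_Im.
Qed.

Lemma cont_Cminus (f g : R -> C) x : continuous f x -> continuous g x -> continuous (fun t => Cminus (f t) (g t)) x.
Proof. intros Hf Hg. apply cont_pair; simpl.
  - apply (continuous_plus (fun t => Re (f t)) (fun t => - Re (g t))). auto using cont_Re.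
    apply (continuous_opp (fun t => Re (g t))); auto using cont_Re.
  - apply (continuous_plus (fun t => Im (f t)) (fun t => - Im (g t))). auto using cont_Im.
    apply (continuous_opp (fun t => Im (g t))); auto using cont_Im.
Qed.

Lemma cont_const (c : C) x : continuous (fun _ : R => c) x.
Proof. apply cont_pair; apply continuous_const. Qed.

Lemma cont_cexpi_lin (c d : R) x : continuous (fun t => cexpi (c * t + d)) x.
Proof. apply cont_pair; simpl; apply (ex_derive_continuous (K:=R_AbsRing) (V:=R_NormedModule)); auto_derive; auto. Qed.

Lemma is_derive_eq {V : NormedModule R_AbsRing} (f : R -> V) x l l' : is_derive f x l -> l = l' -> is_derive f x l'.
Proof. intros H ->; exact H. Qed.

Lemma is_derive_C_pair (f : R -> C) x a b :
  is_derive (fun t => Re (f t)) x a -> is_derive (fun t => Im (f t)) x b -> is_derive f x ((a, b) : C).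
Proof. intros H1 H2. unfold is_derive in *.
  apply filterdiff_ext with (f := fun t => ((Re (f t), Im (f t)) : C)). intros; now rewrite <- C_eta.
  apply filterdiff_ext_lin with (l1 := fun y => ((scal y a, scal y b) : C)).
  apply (filterdiff_comp'_2 (fun t => Re (f t)) (fun t => Im (f t)) (fun u v => ((u,v) : C)) x _ _ (fun u v => ((u,v):C))); auto.
  apply (filterdiff_linear (K:=R_AbsRing) (U:=prod_NormedModule R_AbsRing R_NormedModule R_NormedModule) (V:=C_R_NormedModule) (fun t => ((fst t, snd t) : C))).
  apply (is_linear_prod (K:=R_AbsRing) (T:=prod_NormedModule R_AbsRing R_NormedModule R_NormedModule) (U:=R_NormedModule) (V:=R_NormedModule)).
  apply is_linear_fst. apply is_linear_snd.
  intros; reflexivity.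
Qed.

Lemma is_derive_Re (f : R -> C) x l : is_derive f x l -> is_derive (fun t => Re (f t)) x (Re l).
Proof. intros H. unfold is_derive in *.
  apply filterdiff_ext_lin with (l1 := fun y => fst (scal y l)).
  apply (filterdiff_comp' f (fun z : C_R_NormedModule => fst z) x _ (fun z : C_R_NormedModule => fst z)); auto.
  apply (filterdiff_linear (K:=R_AbsRing) (U:=prod_NormedModule R_AbsRing R_NormedModule R_NormedModule) (V:=R_NormedModule)).
  apply is_linear_fst. intros; reflexivity.
Qed.
Lemma is_derive_Im (f : R -> C) x l : is_derive f x l -> is_derive (fun t => Im (f t)) x (Im l).
Proof. intros H. unfold is_derive in *.
  apply filterdiff_ext_lin with (l1 := fun y => snd (scal y l)).
  apply (filterdiff_comp' f (fun z : C_R_NormedModule => snd z) x _ (fun z : C_R_NormedModule => snd z)); auto.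
  apply (filterdiff_linear (K:=R_AbsRing) (U:=prod_NormedModule R_AbsRing R_NormedModule R_NormedModule) (V:=R_NormedModule)).
  apply is_linear_snd. intros; reflexivity.
Qed.

Lemma is_derive_Cmult (u v : R -> C) x u' v' : is_derive u x u' -> is_derive v x v' ->
  is_derive (fun t => Cmult (u t) (v t)) x (Cplus (Cmult u' (v x)) (Cmult (u x) v')).
Proof. intros Hu Hv.
  pose proof (is_derive_Re _ _ _ Hu) as Hur. pose proof (is_derive_Im _ _ _ Hu) as Hui.
  pose proof (is_derive_Re _ _ _ Hv) as Hvr. pose proof (is_derive_Im _ _ _ Hv) as Hvi.
  rewrite (C_eta (Cplus _ _)). apply is_derive_C_pair; simpl.
  - eapply is_derive_eq. apply (is_derive_minus (fun t => Re (u t) * Re (v t)) (fun t => Im (u t) * Im (v t)));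
     apply Derive.is_derive_mult; eauto. simpl. unfold minus, plus, opp, Re, Im; simpl. ring.
  - eapply is_derive_eq. apply (is_derive_plus (fun t => Re (u t) * Im (v t)) (fun t => Im (u t) * Re (v t)));
     apply Derive.is_derive_mult; eauto. simpl. unfold minus, plus, opp, Re, Im; simpl. ring.
Qed.

Lemma is_derive_cexpi_lin (c d x : R) : is_derive (fun t => cexpi (c * t + d)) x (Cmult (0, c) (cexpi (c * x + d))).
Proof. rewrite (C_eta (Cmult _ _)). apply is_derive_C_pair; simpl; auto_derive; auto; ring. Qed.

Lemma is_derive_Cconst (c : C) (x : R) : is_derive (K:=R_AbsRing) (V:=C_R_NormedModule) (fun _ : R => c) x (RtoC 0).
Proof. rewrite (C_eta (RtoC 0)). apply is_derive_C_pair; simpl; auto_derive; auto. Qed.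

Lemma is_derive_Cminus (u v : R -> C) x u' v' : is_derive u x u' -> is_derive v x v' ->
  is_derive (fun t => Cminus (u t) (v t)) x (Cminus u' v').
Proof. intros Hu Hv.
  pose proof (is_derive_Re _ _ _ Hu) as Hur. pose proof (is_derive_Im _ _ _ Hu) as Hui.
  pose proof (is_derive_Re _ _ _ Hv) as Hvr. pose proof (is_derive_Im _ _ _ Hv) as Hvi.
  rewrite (C_eta (Cminus _ _)). apply is_derive_C_pair; simpl.
  - eapply is_derive_eq. apply (is_derive_minus (fun t => Re (u t)) (fun t => Re (v t))); eauto.
    unfold minus, plus, opp, Re, Im; simpl. ring.
  - eapply is_derive_eq. apply (is_derive_minus (fun t => Im (u t)) (fun t => Im (v t))); eauto.
    unfold minus, plus, opp, Re, Im; simpl. ring.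
Qed.

Definition CInt (f : R -> C) a b : C := @RInt C_R_CompleteNormedModule f a b.

Lemma ex_cont (f : R -> C) a b : Cont f -> ex_RInt (V:=C_R_CompleteNormedModule) f a b.
Proof. intros H. apply ex_RInt_continuous. intros; apply H. Qed.

Lemma RInt_Re (f : R -> C) a b : ex_RInt (V:=C_R_CompleteNormedModule) f a b ->
  Re (CInt f a b) = RInt (fun t => Re (f t)) a b.
Proof. intros H. apply RInt_correct in H.
  apply (is_RInt_fct_extend_fst (U:=R_NormedModule) (V:=R_NormedModule)) in H.
  symmetry. apply is_RInt_unique. exact H. Qed.
Lemma RInt_Im (f : R -> C) a b : ex_RInt (V:=C_R_CompleteNormedModule) f a b ->
  Im (CInt f a b) = RInt (fun t => Im (f t)) a b.
Proof. intros H. apply RInt_correct in H.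
  apply (is_RInt_fct_extend_snd (U:=R_NormedModule) (V:=R_NormedModule)) in H.
  symmetry. apply is_RInt_unique. exact H. Qed.

Lemma is_RInt_eq {V : NormedModule R_AbsRing} (f : R -> V) a b l l' : is_RInt f a b l -> l = l' -> is_RInt f a b l'.
Proof. intros H ->; exact H. Qed.

Lemma is_RInt_Cmult_l (f : R -> C) a b (l c : C) : is_RInt (V:=C_R_NormedModule) f a b l ->
  is_RInt (V:=C_R_NormedModule) (fun t => Cmult c (f t)) a b (Cmult c l).
Proof. intros H.
  pose proof (is_RInt_fct_extend_fst (U:=R_NormedModule) (V:=R_NormedModule) _ _ _ _ H) as H1.
  pose proof (is_RInt_fct_extend_snd (U:=R_NormedModule) (V:=R_NormedModule) _ _ _ _ H) as H2.
  rewrite (C_eta (Cmult c l)).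
  apply (is_RInt_fct_extend_pair (U:=R_NormedModule) (V:=R_NormedModule)); simpl.
  - eapply is_RInt_eq.
    apply (is_RInt_minus (V:=R_NormedModule) (fun t => fst c * fst (f t)) (fun t => snd c * snd (f t)));
      apply (is_RInt_scal (V:=R_NormedModule)); eauto.
    unfold minus, plus, opp, scal; simpl. unfold mult; simpl. unfold Re, Im; ring.
  - eapply is_RInt_eq.
    apply (is_RInt_plus (V:=R_NormedModule) (fun t => fst c * snd (f t)) (fun t => snd c * fst (f t)));
      apply (is_RInt_scal (V:=R_NormedModule)); eauto.
    unfold minus, plus, opp, scal; simpl. unfold mult; simpl. unfold Re, Im; ring.
Qed.

Lemma CInt_Cmult_l (f : R -> C) a b (c : C) : ex_RInt (V:=C_R_CompleteNormedModule) f a b ->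
  CInt (fun t => Cmult c (f t)) a b = Cmult c (CInt f a b).
Proof. intros H. unfold CInt. apply (is_RInt_unique (V:=C_R_CompleteNormedModule)). apply is_RInt_Cmult_l. apply (RInt_correct (V:=C_R_CompleteNormedModule)). exact H. Qed.

Lemma CInt_plus (f g : R -> C) a b : ex_RInt (V:=C_R_CompleteNormedModule) f a b -> ex_RInt (V:=C_R_CompleteNormedModule) g a b ->
  CInt (fun t => Cplus (f t) (g t)) a b = Cplus (CInt f a b) (CInt g a b).
Proof. intros H1 H2. apply (RInt_plus (V:=C_R_CompleteNormedModule) f g a b H1 H2). Qed.

Lemma CInt_minus (f g : R -> C) a b : ex_RInt (V:=C_R_CompleteNormedModule) f a b -> ex_RInt (V:=C_R_CompleteNormedModule) g a b ->
  CInt (fun t => Cminus (f t) (g t)) a b = Cminus (CInt f a b) (CInt g a b).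
Proof. intros H1 H2. apply (RInt_minus (V:=C_R_CompleteNormedModule) f g a b H1 H2). Qed.

Lemma CInt_ext (f g : R -> C) a b : (forall t, f t = g t) -> CInt f a b = CInt g a b.
Proof. intros H. unfold CInt. apply (RInt_ext (V:=C_R_CompleteNormedModule)). intros; apply H. Qed.

Lemma Cmod_CInt_le (f : R -> C) a b M : a <= b -> ex_RInt (V:=C_R_CompleteNormedModule) f a b ->
  (forall t, a <= t <= b -> Cmod (f t) <= M) -> Cmod (CInt f a b) <= (b - a) * M.
Proof. intros Hab Hex HM. rewrite Cmod_norm.
  apply (norm_RInt_le_const (V:=C_R_NormedModule) f a b); auto.
  intros t Ht. rewrite <- Cmod_norm. auto.
  apply (RInt_correct (V:=C_R_CompleteNormedModule)). exact Hex. Qed.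

Lemma per_nat {X} (f : R -> X) p : (forall x, f (x + p) = f x) -> forall n x, f (x + INR n * p) = f x.
Proof. intros H n; induction n; intros x.
  - simpl. rewrite Rmult_0_l, Rplus_0_r. reflexivity.
  - rewrite S_INR. replace (x + (INR n + 1) * p) with ((x + INR n * p) + p) by ring. rewrite H. apply IHn. Qed.

Lemma per_Z {X} (f : R -> X) p : (forall x, f (x + p) = f x) -> forall z x, f (x + IZR z * p) = f x.
Proof. intros H z x. destruct z as [|q|q].
  - simpl. rewrite Rmult_0_l, Rplus_0_r; reflexivity.
  - rewrite <- positive_nat_Z, <- INR_IZR_INZ. apply per_nat; auto.
  - rewrite <- Pos2Z.opp_pos, opp_IZR, <- positive_nat_Z, <- INR_IZR_INZ.
    rewrite <- (per_nat f p H (Pos.to_nat q) (x + - INR (Pos.to_nat q) * p)). f_equal. ring.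
Qed.

Lemma cexpi_per z y : cexpi (y + IZR z * (2 * PI)) = cexpi y.
Proof. unfold cexpi. f_equal.
  - apply (per_Z cos). intros; rewrite cos_plus, cos_2PI, sin_2PI; ring.
  - apply (per_Z sin). intros; rewrite sin_plus, cos_2PI, sin_2PI; ring.
Qed.

Lemma per_reduce {X} (f : R -> X) T : 0 < T -> (forall x, f (x + T) = f x) ->
  forall x, exists y, 0 <= y <= T /\ f x = f y.
Proof. intros HT H x. destruct (archimed (x / T)) as [h1 h2].
  set (z := (up (x / T) - 1)%Z).
  assert (Hz : IZR z = IZR (up (x/T)) - 1) by (unfold z; rewrite minus_IZR; reflexivity).
  exists (x - IZR z * T). split.
  - assert (IZR z <= x / T < IZR z + 1) by lra.
    assert (IZR z * T <= x /T * T < (IZR z + 1) * T) by (split; [apply Rmult_le_compat_r|apply Rmult_lt_compat_r]; lra).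
    replace (x / T * T) with x in H1 by (field; lra). nra.
  - rewrite <- (per_Z f T H z (x - IZR z * T)). f_equal. ring.
Qed.

Lemma RInt_shift {V : CompleteNormedModule R_AbsRing} (f : R -> V) T x :
  (forall y, f (y + T) = f y) -> (forall a b, ex_RInt f a b) -> RInt f x (x + T) = RInt f 0 T.
Proof. intros Hp Hex.
  rewrite <- (RInt_Chasles f x T (x + T)) by auto.
  rewrite <- (RInt_Chasles f 0 x T) by auto.
  assert (E : RInt f T (x + T) = RInt f 0 x).
  { replace T with (1 * 0 + T) at 1 by ring. replace (x + T) with (1 * x + T) by ring.
    rewrite <- RInt_comp_lin by (apply Hex).
    apply RInt_ext. intros y _. etransitivity. exact (scal_one (f (1 * y + T))). replace (1 * y + T) with (y + T) by ring. apply Hp. }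
  rewrite E. apply plus_comm.
Qed.

Lemma mean_lim (f : R -> R) T B : 0 < T -> (forall x, continuous f x) -> (forall x, f (x + T) = f x) ->
  (forall x, Rabs (f x) <= B) ->
  is_lim (fun x => / (2 * x) * RInt f (- x) x) p_infty (/ T * RInt f 0 T).
Proof. intros HT Hc Hp HB.
  set (c := / T * RInt f 0 T).
  assert (Hexf : forall a b, ex_RInt f a b) by (intros; apply (ex_RInt_continuous (V:=R_CompleteNormedModule)); intros; apply Hc).
  set (g := fun s => f s - c).
  assert (Hexg : forall a b, ex_RInt g a b).
  { intros. apply (ex_RInt_minus (V:=R_NormedModule)); auto. apply ex_RInt_const. }
  assert (Hg : forall a b, RInt g a b = RInt f a b - (b - a) * c).
  { intros. unfold g. rewrite (RInt_minus (V:=R_CompleteNormedModule)); auto. rewrite RInt_const. reflexivity. apply ex_RInt_const. }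
  set (G := fun x => RInt g 0 x).
  assert (Hpg : forall x, g (x + T) = g x) by (intros; unfold g; rewrite Hp; reflexivity).
  assert (HGp : forall x, G (x + T) = G x).
  { intros x. unfold G. rewrite <- (RInt_Chasles g 0 x (x + T)) by auto.
    rewrite (RInt_shift g T x Hpg Hexg). rewrite (Hg 0 T). unfold plus; simpl. unfold c. field. lra. }
  set (M := T * (B + Rabs c)).
  assert (HGb : forall x, Rabs (G x) <= M).
  { intros x. destruct (per_reduce G T HT HGp x) as [y [Hy ->]].
    unfold G. apply Rle_trans with ((y - 0) * (B + Rabs c)).
    apply (norm_RInt_le_const (V:=R_NormedModule) g 0 y); try lra.
    intros t _. unfold g. change (norm (f t - c)) with (Rabs (f t - c)).
    eapply Rle_trans. apply Rabs_triang. rewrite Rabs_Ropp. specialize (HB t). lra.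
    apply (RInt_correct (V:=R_CompleteNormedModule)). auto.
    unfold M. apply Rmult_le_compat_r. pose proof (Rabs_pos c); pose proof (HB 0); pose proof (Rabs_pos (f 0)); lra. lra. }
  apply is_lim_spec. intros eps. simpl.
  exists (M / eps + 1). intros x Hx.
  assert (HM : 0 <= M). { pose proof (HGb 0). pose proof (Rabs_pos (G 0)). lra. }
  assert (Hx0 : 0 < x). { assert (0 <= M / eps). apply Rmult_le_pos; [lra| left; apply Rinv_0_lt_compat; apply eps]. lra. }
  assert (E : RInt f (- x) x = G x - G (- x) + 2 * x * c).
  { unfold G. replace (RInt f (-x) x) with (RInt g (-x) x + (x - - x) * c) by (rewrite Hg; ring).
    rewrite <- (RInt_Chasles g (-x) 0 x) by auto.
    rewrite <- (opp_RInt_swap g 0 (-x)) by auto. unfold plus, opp; simpl. ring. }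
  rewrite E.
  replace (/ (2 * x) * (G x - G (- x) + 2 * x * c) - c) with ((G x - G (- x)) / (2 * x)) by (field; lra).
  rewrite Rabs_div by lra. rewrite (Rabs_right (2 * x)) by lra.
  apply Rle_lt_trans with ((2 * M) / (2 * x)).
  - unfold Rdiv. apply Rmult_le_compat_r. left; apply Rinv_0_lt_compat; lra.
    eapply Rle_trans. apply Rabs_triang. rewrite Rabs_Ropp. pose proof (HGb x); pose proof (HGb (-x)); lra.
  - replace (2 * M / (2 * x)) with (M / x) by (field; lra).
    apply (Rmult_lt_reg_r x); [lra|]. unfold Rdiv. rewrite Rmult_assoc, Rinv_l, Rmult_1_r by lra.
    pose proof (cond_pos eps).
    assert (M / eps * eps = M) by (field; lra).
    assert (M / eps < x) by lra.
    assert (M / eps * eps < x * eps) by (apply Rmult_lt_compat_r; lra). lra.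
Qed.

Definition Per (omega : R) (f : R -> C) := forall x, f (x + 2 * PI / omega) = f x.
Definition Ecf (omega : R) (m : Z) (t : R) : C := cexpi (- (IZR m * omega * t)).

Lemma Cmod_cexpi x : Cmod (cexpi x) = 1.
Proof. unfold Cmod, cexpi; simpl. pose proof (sin2_cos2 x). unfold Rsqr in H. replace (cos x * (cos x * 1) + sin x * (sin x * 1)) with 1 by nra. apply sqrt_1. Qed.

Lemma cexpi_add x y : Cmult (cexpi x) (cexpi y) = cexpi (x + y).
Proof. unfold cexpi, Cmult; simpl. rewrite cos_plus, sin_plus. f_equal; ring. Qed.

Lemma cont_E omega m x : continuous (Ecf omega m) x.
Proof. unfold Ecf. apply continuous_ext with (f := fun t => cexpi ((- (IZR m * omega)) * t + 0)).
  intros; f_equal; ring. apply cont_cexpi_lin. Qed.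

Lemma cont_e omega n x : continuous (fun t => cexpi (IZR n * omega * t)) x.
Proof. apply continuous_ext with (f := fun t => cexpi ((IZR n * omega) * t + 0)).
  intros; f_equal; ring. apply cont_cexpi_lin. Qed.

Lemma fcoef_eq omega h m : fcoef omega h m = Cmult (RtoC (omega / (2 * PI))) (CInt (fun t => Cmult (h t) (Ecf omega m t)) 0 (2 * PI / omega)).
Proof. reflexivity. Qed.

Lemma cont_hE omega h m : Cont h -> Cont (fun t => Cmult (h t) (Ecf omega m t)).
Proof. intros H x. apply cont_Cmult; auto. apply cont_E. Qed.

Lemma fcoef_bound omega h m B : 0 < omega -> Cont h -> (forall t, 0 <= t <= 2 * PI / omega -> Cmod (h t) <= B) ->
  Cmod (fcoef omega h m) <= B.
Proof. intros Ho Hc HB. rewrite fcoef_eq, Cmod_mult, Cmod_R.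
  assert (HP := PI_RGT_0).
  rewrite Rabs_right by (apply Rle_ge; unfold Rdiv; apply Rmult_le_pos; [lra|left; apply Rinv_0_lt_compat; lra]).
  apply Rle_trans with (omega / (2 * PI) * ((2 * PI / omega - 0) * B)).
  apply Rmult_le_compat_l. unfold Rdiv; apply Rmult_le_pos; [lra|left; apply Rinv_0_lt_compat; lra].
  apply Cmod_CInt_le. unfold Rdiv; apply Rmult_le_pos; [lra|left; apply Rinv_0_lt_compat; lra].
  apply ex_cont, cont_hE, Hc.
  intros t Ht. rewrite Cmod_mult. unfold Ecf. rewrite Cmod_cexpi, Rmult_1_r. auto.
  right. field. lra.
Qed.

Lemma fcoef_shift omega h n m : fcoef omega (fun t => Cmult (cexpi (IZR n * omega * t)) (h t)) m = fcoef omega h (m - n).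
Proof. rewrite !fcoef_eq. f_equal. apply CInt_ext. intros t. unfold Ecf.
  rewrite <- Cmult_assoc, (Cmult_comm (cexpi _)), <- Cmult_assoc, cexpi_add. f_equal. f_equal.
  rewrite minus_IZR. ring. Qed.

Lemma fcoef_scal omega h c m : Cont h -> fcoef omega (fun t => Cmult c (h t)) m = Cmult c (fcoef omega h m).
Proof. intros H. rewrite !fcoef_eq.
  rewrite (CInt_ext _ (fun t => Cmult c (Cmult (h t) (Ecf omega m t)))) by (intros; ring).
  rewrite CInt_Cmult_l by (apply ex_cont, cont_hE, H). ring. Qed.

Lemma fcoef_plus omega h1 h2 m : Cont h1 -> Cont h2 ->
  fcoef omega (fun t => Cplus (h1 t) (h2 t)) m = Cplus (fcoef omega h1 m) (fcoef omega h2 m).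
Proof. intros H1 H2. rewrite !fcoef_eq.
  rewrite (CInt_ext _ (fun t => Cplus (Cmult (h1 t) (Ecf omega m t)) (Cmult (h2 t) (Ecf omega m t)))) by (intros; ring).
  rewrite CInt_plus by (apply ex_cont, cont_hE; auto). ring. Qed.

Lemma fcoef_minus omega h1 h2 m : Cont h1 -> Cont h2 ->
  fcoef omega (fun t => Cminus (h1 t) (h2 t)) m = Cminus (fcoef omega h1 m) (fcoef omega h2 m).
Proof. intros H1 H2. rewrite !fcoef_eq.
  rewrite (CInt_ext _ (fun t => Cminus (Cmult (h1 t) (Ecf omega m t)) (Cmult (h2 t) (Ecf omega m t)))) by (intros; ring).
  rewrite CInt_minus by (apply ex_cont, cont_hE; auto). ring. Qed.

Lemma omega_T omega : 0 < omega -> omega * (2 * PI / omega) = 2 * PI.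
Proof. intros; field; lra. Qed.

Lemma Ecf_T omega m : 0 < omega -> Ecf omega m (2 * PI / omega) = Ecf omega m 0.
Proof. intros Ho. unfold Ecf. rewrite Rmult_assoc, omega_T by auto.
  replace (- (IZR m * (2 * PI))) with (0 + IZR (- m) * (2 * PI)) by (rewrite opp_IZR; ring).
  rewrite cexpi_per. f_equal. ring. Qed.

Lemma is_derive_E omega m x : is_derive (Ecf omega m) x (Cmult (0, - (IZR m * omega)) (Ecf omega m x)).
Proof. unfold Ecf.
  assert (H := is_derive_cexpi_lin (- (IZR m * omega)) 0 x).
  replace (- (IZR m * omega) * x + 0) with (- (IZR m * omega * x)) in H by ring.
  eapply filterdiff_ext. 2: exact H. intros; simpl. f_equal; ring. Qed.

Lemma CInt_E_0 omega m : 0 < omega -> m <> 0%Z -> CInt (Ecf omega m) 0 (2 * PI / omega) = RtoC 0.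
Proof. intros Ho Hm.
  set (u := - (IZR m * omega)).
  assert (Hu : u <> 0). { unfold u. intros H. apply Hm. apply eq_IZR. apply Rmult_eq_reg_r with omega; nra. }
  assert (H : is_RInt (V:=C_R_NormedModule) (fun t => Cmult (0, u) (Ecf omega m t)) 0 (2 * PI / omega)
    (minus (Ecf omega m (2 * PI / omega)) (Ecf omega m 0))).
  { apply (is_RInt_derive (V:=C_R_CompleteNormedModule)). intros; apply is_derive_E.
    intros. apply cont_Cmult. apply cont_const. apply cont_E. }
  rewrite Ecf_T in H by auto. rewrite minus_eq_zero in H.
  apply (is_RInt_unique (V:=C_R_CompleteNormedModule)) in H.
  change (CInt (fun t => Cmult (0, u) (Ecf omega m t)) 0 (2 * PI / omega) = RtoC 0) in H.
  rewrite CInt_Cmult_l in H by (apply ex_cont; intro; apply cont_E).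
  apply Cmod_eq_0. apply (f_equal Cmod) in H. rewrite Cmod_mult, Cmod_0 in H.
  assert (Cmod ((0, u) : C) <> 0). { intros H'. apply Cmod_eq_0 in H'. injection H'. auto. }
  apply Rmult_integral in H. destruct H; [contradiction|auto].
Qed.

Lemma fcoef_const_nz omega c m : 0 < omega -> m <> 0%Z -> fcoef omega (fun _ => c) m = RtoC 0.
Proof. intros Ho Hm. rewrite fcoef_eq.
  rewrite CInt_Cmult_l by (apply ex_cont; intro; apply cont_E).
  rewrite CInt_E_0 by auto. ring. Qed.

Lemma fcoef_0 omega h : 0 < omega -> fcoef omega h 0 = Cmult (RtoC (omega / (2 * PI))) (CInt h 0 (2 * PI / omega)).
Proof. intros. rewrite fcoef_eq. f_equal. apply CInt_ext. intros t. unfold Ecf, cexpi.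
  replace (- (IZR 0 * omega * t)) with 0 by (simpl; ring). rewrite cos_0, sin_0.
  change (Cmult (h t) 1 = h t). ring. Qed.

Lemma fcoef_const_0 omega c : 0 < omega -> fcoef omega (fun _ => c) 0 = c.
Proof. intros Ho. rewrite fcoef_0 by auto.
  unfold CInt. rewrite (RInt_const (V:=C_R_CompleteNormedModule)).
  destruct c as [c1 c2]. unfold scal; simpl. unfold prod_scal; simpl. unfold scal; simpl. unfold mult; simpl.
  unfold Cmult, RtoC; simpl. assert (HP := PI_RGT_0). f_equal; field; lra. Qed.

Lemma is_derive_prim (g : R -> C) x : Cont g -> is_derive (fun t => CInt g 0 t) x (g x).
Proof. intros Hg. apply (is_derive_RInt (V:=C_R_NormedModule) g (fun t => CInt g 0 t) 0 x).
  apply filter_forall. intros y. apply (RInt_correct (V:=C_R_CompleteNormedModule)). apply ex_cont, Hg.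
  apply Hg. Qed.

Lemma cont_prim (g : R -> C) : Cont g -> Cont (fun t => CInt g 0 t).
Proof. intros Hg x. apply (ex_derive_continuous (K:=R_AbsRing) (V:=C_R_NormedModule)).
  eexists. apply is_derive_prim, Hg. Qed.

Lemma Cmod_0u u : Cmod ((0, u) : C) = Rabs u.
Proof. unfold Cmod; simpl. rewrite <- sqrt_Rsqr_abs. f_equal. unfold Rsqr; ring. Qed.

Lemma ibp omega (g : R -> C) n : 0 < omega -> Cont g -> CInt g 0 (2 * PI / omega) = RtoC 0 -> n <> 0%Z ->
  Cmod (fcoef omega (fun t => CInt g 0 t) n) * (Rabs (IZR n) * omega) = Cmod (fcoef omega g n).
Proof. intros Ho Hg HT Hn.
  set (b := fun t => CInt g 0 t).
  set (u := - (IZR n * omega)).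
  set (T := 2 * PI / omega).
  assert (Hb : Cont b) by (apply cont_prim, Hg).
  assert (H : is_RInt (V:=C_R_NormedModule)
     (fun t => Cplus (Cmult (g t) (Ecf omega n t)) (Cmult (b t) (Cmult (0, u) (Ecf omega n t)))) 0 T
    (minus (Cmult (b T) (Ecf omega n T)) (Cmult (b 0) (Ecf omega n 0)))).
  { apply (is_RInt_derive (V:=C_R_CompleteNormedModule) (fun t => Cmult (b t) (Ecf omega n t))).
    intros x _. apply is_derive_Cmult. apply is_derive_prim, Hg. apply is_derive_E.
    intros x _. apply cont_Cplus; apply cont_Cmult; auto using cont_E, cont_Cmult, cont_const. }
  assert (Hb0 : b 0 = RtoC 0). { unfold b, CInt. apply (RInt_point (V:=C_R_CompleteNormedModule)). }
  assert (HbT : b T = RtoC 0) by exact HT.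
  rewrite Hb0, HbT in H.
  apply (is_RInt_unique (V:=C_R_CompleteNormedModule)) in H.
  change (CInt (fun t => Cplus (Cmult (g t) (Ecf omega n t)) (Cmult (b t) (Cmult (0, u) (Ecf omega n t)))) 0 T
     = Cminus (Cmult 0 (Ecf omega n T)) (Cmult 0 (Ecf omega n 0))) in H.
  assert (C1 : Cont (fun t => Cmult (g t) (Ecf omega n t))) by (intro; apply cont_Cmult; [apply Hg|apply cont_E]).
  assert (C2 : Cont (fun t => Cmult (b t) (Ecf omega n t))) by (intro; apply cont_Cmult; [apply Hb|apply cont_E]).
  assert (C3 : Cont (fun t => Cmult (b t) (Cmult (0, u) (Ecf omega n t)))).
  { intro; apply cont_Cmult; [apply Hb|]. apply cont_Cmult; [apply cont_const|apply cont_E]. }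
  rewrite CInt_plus in H by (apply ex_cont; assumption).
  rewrite (CInt_ext (fun t => Cmult (b t) (Cmult (0, u) (Ecf omega n t))) (fun t => Cmult (0,u) (Cmult (b t) (Ecf omega n t)))) in H by (intros; ring).
  rewrite CInt_Cmult_l in H by (apply ex_cont; assumption).
  assert (H2 : Cmult (0, u) (CInt (fun t => Cmult (b t) (Ecf omega n t)) 0 T) = Copp (CInt (fun t => Cmult (g t) (Ecf omega n t)) 0 T)).
  { set (X := CInt (fun t => Cmult (b t) (Ecf omega n t)) 0 T) in *.
    set (Y := CInt (fun t => Cmult (g t) (Ecf omega n t)) 0 T) in *.
    replace (Cmult (0, u) X) with (Cminus (Cplus Y (Cmult (0,u) X)) Y) by ring. rewrite H. ring. }
  apply (f_equal Cmod) in H2. rewrite Cmod_mult, Cmod_opp, Cmod_0u in H2.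
  rewrite !fcoef_eq. fold T. fold b. rewrite !Cmod_mult, <- H2.
  unfold u. rewrite Rabs_Ropp, Rabs_mult, (Rabs_right omega) by lra. ring.
Qed.

Lemma fold_Cplus_init (L : list C) z : fold_right Cplus z L = Cplus (fold_right Cplus (RtoC 0) L) z.
Proof. induction L; simpl. ring. rewrite IHL. ring. Qed.

Lemma sym_psum_0 f : sym_psum 0 f = Cplus (f 0%Z) (RtoC 0).
Proof. reflexivity. Qed.

Lemma sym_psum_S N f : sym_psum (S N) f =
  Cplus (Cplus (sym_psum N f) (f (- Z.of_nat (S N))%Z)) (f (Z.of_nat (S N))).
Proof. unfold sym_psum.
  set (L := (2 * N + 1)%nat).
  replace (2 * S N + 1)%nat with (S (S L)) by (unfold L; lia).
  rewrite seq_S. change (seq 0 (S L)) with (0%nat :: seq 1 L).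
  rewrite map_app, fold_right_app. change (map ?g (0%nat :: ?l)) with (g 0%nat :: map g l).
  change (fold_right Cplus (RtoC 0) (map ?g (?x :: nil))) with (Cplus (g x) (RtoC 0)).
  change (fold_right Cplus ?z (?y :: ?l)) with (Cplus y (fold_right Cplus z l)).
  rewrite <- seq_shift, map_map.
  rewrite fold_Cplus_init.
  replace (map (fun x : nat => f (Z.of_nat (S x) - Z.of_nat (S N))%Z) (seq 0 L))
    with (map (fun j : nat => f (Z.of_nat j - Z.of_nat N)%Z) (seq 0 L)).
  2:{ apply map_ext. intros j. f_equal. lia. }
  replace (Z.of_nat 0 - Z.of_nat (S N))%Z with (- Z.of_nat (S N))%Z by lia.
  replace (Z.of_nat (0 + S L) - Z.of_nat (S N))%Z with (Z.of_nat (S N)) by (unfold L; lia).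
  ring.
Qed.

Fixpoint rsum (N : nat) (f : Z -> R) : R :=
  match N with
  | O => f 0%Z
  | S n => rsum n f + f (- Z.of_nat (S n))%Z + f (Z.of_nat (S n))
  end.

Lemma rsum_S N f : rsum (S N) f = rsum N f + f (- Z.of_nat (S N))%Z + f (Z.of_nat (S N)).
Proof. reflexivity. Qed.

Lemma Cmod_sym_psum N f : Cmod (sym_psum N f) <= rsum N (fun n => Cmod (f n)).
Proof. induction N.
  - rewrite sym_psum_0, Cplus_0_r. simpl rsum. right; reflexivity.
  - rewrite sym_psum_S, rsum_S.
    eapply Rle_trans. apply Cmod_triangle. apply Rplus_le_compat_r.
    eapply Rle_trans. apply Cmod_triangle. lra.
Qed.

Lemma rsum_le N f g : (forall n, f n <= g n) -> rsum N f <= rsum N g.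
Proof. intros H. induction N. simpl; auto. rewrite !rsum_S. pose proof (H (- Z.of_nat (S N))%Z). pose proof (H (Z.of_nat (S N))). lra. Qed.

Lemma rsum_scal N c f : rsum N (fun n => c * f n) = c * rsum N f.
Proof. induction N. simpl; auto. rewrite !rsum_S, IHN. ring. Qed.

Lemma rsum_nonneg N f : (forall n, 0 <= f n) -> 0 <= rsum N f.
Proof. intros H. induction N. simpl; auto. rewrite !rsum_S. pose proof (H (- Z.of_nat (S N))%Z). pose proof (H (Z.of_nat (S N))). lra. Qed.

Lemma bracket_ge1 m : 1 <= bracket m.
Proof. unfold bracket. destruct (Z.eqb_spec m 0). lra.
  apply IZR_le. lia. Qed.

Lemma bracket_pos m : 0 < bracket m.
Proof. pose proof (bracket_ge1 m). lra. Qed.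

Lemma bracket_nz m : m <> 0%Z -> bracket m = IZR (Z.abs m).
Proof. intros H. unfold bracket. destruct (Z.eqb_spec m 0). contradiction. reflexivity. Qed.

Lemma bracket_abs m : IZR (Z.abs m) <= bracket m.
Proof. unfold bracket. destruct (Z.eqb_spec m 0). subst. simpl. lra. lra. Qed.

Lemma bracket_Sn N : bracket (Z.of_nat (S N)) = INR (S N).
Proof. rewrite bracket_nz by lia. rewrite INR_IZR_INZ. f_equal. Qed.
Lemma bracket_mSn N : bracket (- Z.of_nat (S N)) = INR (S N).
Proof. rewrite bracket_nz by lia. rewrite INR_IZR_INZ. f_equal. Qed.

Lemma bracket_tri m n : bracket m <= bracket n + bracket (m - n).
Proof. destruct (Z.eq_dec m 0) as [->|Hm].
  - replace (bracket 0) with 1 by reflexivity. pose proof (bracket_ge1 n). pose proof (bracket_ge1 (0 - n)). lra.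
  - rewrite (bracket_nz m Hm). pose proof (bracket_abs n). pose proof (bracket_abs (m - n)).
    assert (IZR (Z.abs m) <= IZR (Z.abs n) + IZR (Z.abs (m - n))) by (rewrite <- plus_IZR; apply IZR_le; lia).
    lra.
Qed.

(* telescoping potential *)
Definition psi (j : Z) : R :=
  if Z.leb 1 j then 3 - 2 / (2 * IZR j - 1) else - (3 - 2 / (2 * IZR (1 - j) - 1)).

Lemma key_ineq (k : R) : 1 <= k -> / (k ^ 2) <= 2 / (2 * k - 1) - 2 / (2 * (k + 1) - 1).
Proof. intros Hk.
  replace (2 / (2 * k - 1) - 2 / (2 * (k + 1) - 1)) with (4 / ((2 * k - 1) * (2 * k + 1))) by (field; lra).
  unfold Rdiv. rewrite Rmult_comm.
  apply Rle_trans with (/ ((2 * k - 1) * (2 * k + 1)) * 4 * 1). rewrite Rmult_1_r.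
  2: lra.
  assert (0 < (2 * k - 1) * (2 * k + 1)) by nra.
  assert (0 < k ^ 2) by nra.
  apply (Rmult_le_reg_r (k ^ 2 * ((2 * k - 1) * (2 * k + 1)))). nra.
  replace (/ k ^ 2 * (k ^ 2 * ((2 * k - 1) * (2 * k + 1)))) with ((2 * k - 1) * (2 * k + 1)) by (field; lra).
  replace (/ ((2 * k - 1) * (2 * k + 1)) * 4 * (k ^ 2 * ((2 * k - 1) * (2 * k + 1)))) with (4 * k ^ 2) by (field; lra).
  nra.
Qed.

Lemma psi_step j : / (bracket j ^ 2) <= psi (j + 1) - psi j.
Proof. unfold psi.
  destruct (Z.leb_spec 1 j); destruct (Z.leb_spec 1 (j + 1)); try lia.
  - rewrite bracket_nz by lia. rewrite plus_IZR.
    assert (IZR (Z.abs j) = IZR j) by (f_equal; lia). rewrite H1.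
    assert (1 <= IZR j) by (apply IZR_le; lia).
    pose proof (key_ineq (IZR j) H2). lra.
  - assert (j = 0%Z) by lia. subst. unfold bracket. simpl.
    replace (2 * 1 - 1) with 1 by ring. lra.
  - rewrite bracket_nz by lia.
    set (k := IZR (Z.abs j)).
    assert (E1 : IZR (1 - (j + 1)) = k) by (unfold k; f_equal; lia).
    assert (E2 : IZR (1 - j) = k + 1) by (unfold k; rewrite <- plus_IZR; f_equal; lia).
    rewrite E1, E2.
    assert (1 <= k) by (unfold k; apply IZR_le; lia).
    pose proof (key_ineq k H1). lra.
Qed.

Lemma psi_bound j : Rabs (psi j) <= 3.
Proof. unfold psi. destruct (Z.leb_spec 1 j).
  - assert (1 <= IZR j) by (apply IZR_le; lia).
    assert (0 < 2 / (2 * IZR j - 1) <= 2). { split. apply Rdiv_lt_0_compat; lra.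
      unfold Rdiv. apply Rle_trans with (2 * 1). apply Rmult_le_compat_l. lra.
      rewrite <- Rinv_1. apply Rinv_le_contravar; lra. lra. }
    apply Rabs_le. lra.
  - assert (1 <= IZR (1 - j)) by (apply IZR_le; lia).
    assert (0 < 2 / (2 * IZR (1 - j) - 1) <= 2). { split. apply Rdiv_lt_0_compat; lra.
      unfold Rdiv. apply Rle_trans with (2 * 1). apply Rmult_le_compat_l. lra.
      rewrite <- Rinv_1. apply Rinv_le_contravar; lra. lra. }
    apply Rabs_le. lra.
Qed.

Lemma window_sum N m : rsum N (fun n => / (bracket (m - n) ^ 2)) <= psi (m + Z.of_nat N + 1) - psi (m - Z.of_nat N).
Proof. induction N.
  - simpl rsum. replace (m - 0)%Z with m by lia. replace (m + Z.of_nat 0 + 1)%Z with (m + 1)%Z by lia.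
    replace (m - Z.of_nat 0)%Z with m by lia. apply psi_step.
  - rewrite rsum_S. pose proof (psi_step (m + Z.of_nat (S N))%Z) as H1.
    pose proof (psi_step (m - Z.of_nat (S N))%Z) as H2.
    replace (m - - Z.of_nat (S N))%Z with (m + Z.of_nat (S N))%Z by lia.
    replace (m + Z.of_nat (S N) + 1)%Z with (m + Z.of_nat N + 1 + 1)%Z by lia.
    replace (m + Z.of_nat (S N))%Z with (m + Z.of_nat N + 1)%Z in H1 |- * by lia.
    replace (m - Z.of_nat (S N) + 1)%Z with (m - Z.of_nat N)%Z in H2 by lia.
    lra.
Qed.

Lemma window_sum6 N m : rsum N (fun n => / (bracket (m - n) ^ 2)) <= 6.
Proof. eapply Rle_trans. apply window_sum.
  pose proof (psi_bound (m + Z.of_nat N + 1)). pose proof (psi_bound (m - Z.of_nat N)).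
  apply Rabs_le_between in H. apply Rabs_le_between in H0. lra. Qed.

Lemma window_sum6' N : rsum N (fun n => / (bracket n ^ 2)) <= 6.
Proof. eapply Rle_trans. 2: apply (window_sum6 N 0). right.
  induction N. simpl. replace (0 - 0)%Z with 0%Z by lia. reflexivity.
  rewrite !rsum_S, IHN. replace (0 - - Z.of_nat (S N))%Z with (Z.of_nat (S N)) by lia.
  replace (0 - Z.of_nat (S N))%Z with (- Z.of_nat (S N))%Z by lia. ring. Qed.

Lemma tail_bound f a N k : 0 <= a -> (1 <= N)%nat -> (forall n, Cmod (f n) <= a / (bracket n ^ 2)) ->
  Cmod (Cminus (sym_psum (N + k) f) (sym_psum N f)) <= 2 * a * (/ INR N - / INR (N + k)).
Proof. intros Ha HN Hf. induction k.
  - rewrite Nat.add_0_r. replace (Cminus (sym_psum N f) (sym_psum N f)) with (RtoC 0) by ring.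
    rewrite Cmod_0. lra.
  - replace (N + S k)%nat with (S (N + k)) by lia. rewrite sym_psum_S.
    set (M := (N + k)%nat) in *.
    replace (Cminus (Cplus (Cplus (sym_psum M f) (f (- Z.of_nat (S M))%Z)) (f (Z.of_nat (S M)))) (sym_psum N f))
      with (Cplus (Cminus (sym_psum M f) (sym_psum N f)) (Cplus (f (- Z.of_nat (S M))%Z) (f (Z.of_nat (S M))))) by ring.
    eapply Rle_trans. apply Cmod_triangle.
    eapply Rle_trans. apply Rplus_le_compat_l. apply Cmod_triangle.
    pose proof (Hf (- Z.of_nat (S M))%Z) as H1. pose proof (Hf (Z.of_nat (S M))) as H2.
    rewrite bracket_mSn in H1. rewrite bracket_Sn in H2.
    assert (HM : 1 <= INR M) by (apply (le_INR 1); unfold M; lia).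
    rewrite S_INR in *.
    pose proof (key_ineq (INR M + 1)).
    assert (/ (INR M + 1) ^ 2 <= / INR M - / (INR M + 1)).
    { replace (/ INR M - / (INR M + 1)) with (/ (INR M * (INR M + 1))) by (field; lra).
      apply Rinv_le_contravar. nra. nra. }
    unfold Rdiv in H1, H2.
    assert (a * / (INR M + 1) ^ 2 <= a * (/ INR M - / (INR M + 1))) by (apply Rmult_le_compat_l; lra).
    lra.
Qed.

Lemma le_lim_N x y c : 0 <= c -> (forall N, (1 <= N)%nat -> x <= y + c / INR N) -> x <= y.
Proof. intros Hc H. destruct (Rle_or_lt x y) as [h|h]; auto. exfalso.
  destruct (archimed_cor1 ((x - y) / (c + 1))) as [N [h1 h2]].
  apply Rdiv_lt_0_compat; lra.
  specialize (H N ltac:(lia)).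
  assert (0 < INR N) by (apply lt_0_INR; lia).
  assert (c / INR N <= (c + 1) / INR N).
  { unfold Rdiv. apply Rmult_le_compat_r. left; apply Rinv_0_lt_compat; lra. lra. }
  assert ((c + 1) / INR N < x - y).
  { unfold Rdiv. rewrite Rmult_comm. apply (Rmult_lt_reg_r (/ (c + 1))). apply Rinv_0_lt_compat; lra.
    rewrite Rmult_assoc, Rinv_r, Rmult_1_r by lra. exact h1. }
  lra.
Qed.

Lemma cont_real_approx (f : R -> R) x : (forall eps, 0 < eps -> exists h : R -> R, continuous h x /\ forall t, Rabs (f t - h t) <= eps) ->
  continuous f x.
Proof. intros H. apply filterlim_locally. intros eps.
  destruct (H (eps / 3)) as [h [Hh Hb]]. pose proof (cond_pos eps); lra.
  unfold continuous in Hh. pose proof (proj1 (filterlim_locally (F := locally x) h (h x)) Hh) as Hh2. clear Hh. rename Hh2 into Hh. specialize (Hh (mkposreal (eps/3) ltac:(pose proof (cond_pos eps); lra))).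
  revert Hh. apply filter_imp. intros y Hy.
  change (Rabs (f y - f x) < eps). change (Rabs (h y - h x) < eps / 3) in Hy.
  pose proof (Hb x). pose proof (Hb y).
  replace (f y - f x) with ((f y - h y) + (h y - h x) + (h x - f x)) by ring.
  eapply Rle_lt_trans. apply Rabs_triang. eapply Rle_lt_trans. apply Rplus_le_compat_r. apply Rabs_triang.
  rewrite (Rabs_minus_sym (h x)). lra.
Qed.

Lemma cont_approx (f : R -> C) x : (forall eps, 0 < eps -> exists h : R -> C, continuous h x /\ forall t, Cmod (Cminus (f t) (h t)) <= eps) ->
  continuous f x.
Proof. intros H. apply cont_pair; apply cont_real_approx; intros eps Heps;
  destruct (H eps Heps) as [h [Hh Hb]].
  - exists (fun t => Re (h t)). split. apply cont_Re, Hh. intros t. eapply Rle_trans. 2: apply (Hb t).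
    eapply Rle_trans. 2: apply re_le_Cmod. right; reflexivity.
  - exists (fun t => Im (h t)). split. apply cont_Im, Hh. intros t. eapply Rle_trans. 2: apply (Hb t).
    eapply Rle_trans. 2: apply Rmax_Cmod. eapply Rle_trans. 2: apply Rmax_r. right; reflexivity.
Qed.

Definition SF (omega : R) (A : Z -> C) (N : nat) (t : R) : C :=
  sym_psum N (fun n => Cmult (A n) (cexpi (IZR n * omega * t))).

Lemma cont_SF omega A N : Cont (SF omega A N).
Proof. intros x. unfold SF. induction N.
  - apply continuous_ext with (f := fun t => Cplus (Cmult (A 0%Z) (cexpi (IZR 0 * omega * t))) (RtoC 0)).
    intros; rewrite sym_psum_0; reflexivity.
    apply cont_Cplus. apply cont_Cmult. apply cont_const. apply cont_e. apply cont_const.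
  - apply continuous_ext with (f := fun t => Cplus (Cplus (sym_psum N (fun n => Cmult (A n) (cexpi (IZR n * omega * t))))
       (Cmult (A (- Z.of_nat (S N))%Z) (cexpi (IZR (- Z.of_nat (S N))%Z * omega * t))))
       (Cmult (A (Z.of_nat (S N))) (cexpi (IZR (Z.of_nat (S N)) * omega * t)))).
    intros t. symmetry. apply sym_psum_S.
    apply cont_Cplus. apply cont_Cplus. exact IHN.
    apply cont_Cmult. apply cont_const. apply cont_e.
    apply cont_Cmult. apply cont_const. apply cont_e.
Qed.

Lemma SF_per omega A N x : 0 < omega -> SF omega A N (x + 2 * PI / omega) = SF omega A N x.
Proof. intros Ho. unfold SF, sym_psum. f_equal. apply map_ext. intros j. f_equal.
  replace (IZR (Z.of_nat j - Z.of_nat N) * omega * (x + 2 * PI / omega))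
    with (IZR (Z.of_nat j - Z.of_nat N) * omega * x + IZR (Z.of_nat j - Z.of_nat N) * (2 * PI)) by (field; lra).
  apply cexpi_per. Qed.

Definition wt (chi : R) (m : Z) : R := exp (- chi * IZR (Z.abs m)) / (bracket m) ^ 2.

Lemma wt_pos chi m : 0 < wt chi m.
Proof. unfold wt. apply Rdiv_lt_0_compat. apply exp_pos. pose proof (bracket_pos m). apply pow_lt; lra. Qed.

Lemma wt_le chi m : 0 <= chi -> wt chi m <= / (bracket m) ^ 2.
Proof. intros Hc. unfold wt. unfold Rdiv. rewrite <- (Rmult_1_l (/ _)) at 2.
  apply Rmult_le_compat_r. left; apply Rinv_0_lt_compat; pose proof (bracket_pos m); apply pow_lt; lra.
  rewrite <- exp_0. destruct (Rle_lt_or_eq_dec (- chi * IZR (Z.abs m)) 0).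
  assert (0 <= IZR (Z.abs m)) by (apply IZR_le; lia). nra.
  left; apply exp_increasing; auto. rewrite e; lra. Qed.

Lemma wt_0 chi : wt chi 0 = 1.
Proof. unfold wt. simpl. replace (- chi * 0) with 0 by ring. rewrite exp_0. unfold bracket; simpl. field. Qed.

Section Series.
Variables (omega chi alpha : R) (A : Z -> C) (a : R -> C).
Hypotheses (Ho : 0 < omega) (Hchi : 0 < chi) (Hal : 0 <= alpha)
  (HF : has_fourier_series omega A a) (HA : forall n, Cmod (A n) <= alpha * wt chi n).



Lemma term_bound t n : Cmod (Cmult (A n) (cexpi (IZR n * omega * t))) <= alpha / (bracket n ^ 2).
Proof. rewrite Cmod_mult, Cmod_cexpi, Rmult_1_r. eapply Rle_trans. apply HA.
  unfold Rdiv. apply Rmult_le_compat_l; auto. apply wt_le; lra. Qed.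

Lemma SF_approx t N : (1 <= N)%nat -> Cmod (Cminus (a t) (SF omega A N t)) <= 2 * alpha / INR N.
Proof. intros HN.
  assert (HNp : 0 < INR N) by (apply lt_0_INR; lia).
  apply (le_lim_N _ _ 1). lra. intros K HK.
  pose proof (proj1 (filterlim_locally (F := eventually) _ _) (HF t)) as HF2. clear HF. rename HF2 into HF.
  assert (He : 0 < / INR K) by (apply Rinv_0_lt_compat, lt_0_INR; lia).
  specialize (HF (mkposreal (/ INR K / norm_factor (V:=C_R_NormedModule)) ltac:(apply Rdiv_lt_0_compat; [exact He| apply norm_factor_gt_0]))).
  destruct HF as [M0 HM0].
  specialize (HM0 (N + M0)%nat ltac:(lia)).
  apply (norm_compat2 (V:=C_R_NormedModule)) in HM0. simpl in HM0.
  rewrite <- Cmod_norm in HM0.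
  replace (norm_factor * (/ INR K / norm_factor)) with (/ INR K) in HM0
    by (field; split; [apply not_0_INR; lia | apply Rgt_not_eq, (norm_factor_gt_0 (V:=C_R_NormedModule))]).
  pose proof (tail_bound (fun n => Cmult (A n) (cexpi (IZR n * omega * t))) alpha N M0 Hal HN (term_bound t)) as HT.
  fold (SF omega A (N + M0) t) in HT. fold (SF omega A N t) in HT.
  replace (Cminus (a t) (SF omega A N t)) with (Cplus (Copp (minus (SF omega A (N + M0) t) (a t))) (Cminus (SF omega A (N + M0) t) (SF omega A N t))).
  2:{ unfold minus, plus, opp; simpl. change (Cplus (Copp (Cplus (SF omega A (N + M0) t) (Copp (a t)))) (Cminus (SF omega A (N + M0) t) (SF omega A N t)) = Cminus (a t) (SF omega A N t)). ring. }
  eapply Rle_trans. apply Cmod_triangle. rewrite Cmod_opp.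
  assert (0 < / INR (N + M0)) by (apply Rinv_0_lt_compat, lt_0_INR; lia).
  unfold Rdiv. unfold Rdiv in HT. rewrite Rmult_1_l. fold (SF omega A (N + M0) t) in HM0. assert (0 <= 2 * alpha * / INR (N + M0)) by (apply Rmult_le_pos; lra). eapply Rle_trans. apply Rplus_le_compat. left; exact HM0. exact HT. lra.
Qed.

Lemma a_cont : Cont a.
Proof. intros x. apply cont_approx. intros eps Heps.
  destruct (archimed_cor1 (eps / (2 * alpha + 1))) as [N [h1 h2]]. apply Rdiv_lt_0_compat; lra.
  exists (SF omega A N). split. apply cont_SF.
  intros t. eapply Rle_trans. apply SF_approx. lia.
  assert (0 < INR N) by (apply lt_0_INR; lia).
  assert (/ INR N * (2 * alpha + 1) < eps).
  { apply (Rmult_lt_compat_r (2 * alpha + 1)) in h1; [|lra].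
    unfold Rdiv in h1. rewrite Rmult_assoc, Rinv_l, Rmult_1_r in h1 by lra. exact h1. }
  unfold Rdiv. assert (/ INR N * (2 * alpha) <= / INR N * (2 * alpha + 1)).
  { apply Rmult_le_compat_l. left; apply Rinv_0_lt_compat; lra. lra. }
  lra.
Qed.

Lemma a_per : Per omega a.
Proof. intros x.
  assert (H : Cminus (a (x + 2 * PI / omega)) (a x) = RtoC 0).
  2: { replace (a (x + 2 * PI / omega)) with (Cplus (Cminus (a (x + 2 * PI / omega)) (a x)) (a x)) by ring.
       rewrite H. ring. }
  apply Cmod_eq_0. apply Rle_antisym. 2: apply Cmod_ge_0.
  apply (le_lim_N _ _ (4 * alpha)). lra. intros N HN.
  replace (Cminus (a (x + 2 * PI / omega)) (a x)) with
    (Cminus (Cminus (a (x + 2 * PI / omega)) (SF omega A N (x + 2 * PI / omega))) (Cminus (a x) (SF omega A N x)))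
    by (rewrite SF_per by auto; ring).
  eapply Rle_trans. unfold Cminus at 1. apply Cmod_triangle. rewrite Cmod_opp.
  pose proof (SF_approx (x + 2 * PI / omega) N HN). pose proof (SF_approx x N HN).
  unfold Rdiv in *. lra.
Qed.

Lemma SF_bnd N t : Cmod (SF omega A N t) <= 6 * alpha.
Proof. unfold SF. eapply Rle_trans. apply Cmod_sym_psum.
  eapply Rle_trans. apply rsum_le. intros n. apply (term_bound t n).
  unfold Rdiv. rewrite rsum_scal. rewrite (Rmult_comm 6). apply Rmult_le_compat_l; auto. apply window_sum6'.
Qed.

Lemma a_bnd t : Cmod (a t) <= 6 * alpha.
Proof. apply (le_lim_N _ _ (2 * alpha)). lra. intros N HN.
  replace (a t) with (Cplus (Cminus (a t) (SF omega A N t)) (SF omega A N t)) by ring.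
  eapply Rle_trans. apply Cmod_triangle. pose proof (SF_approx t N HN). pose proof (SF_bnd N t). lra.
Qed.

End Series.

Lemma fcoef_ext omega h1 h2 m : (forall t, h1 t = h2 t) -> fcoef omega h1 m = fcoef omega h2 m.
Proof. intros H. rewrite !fcoef_eq. f_equal. apply CInt_ext. intros t. rewrite H. reflexivity. Qed.

Lemma fcoef_term omega (c : C) n h m : Cont h ->
  fcoef omega (fun t => Cmult (Cmult c (cexpi (IZR n * omega * t))) (h t)) m = Cmult c (fcoef omega h (m - n)).
Proof. intros Hh.
  rewrite (fcoef_ext _ _ (fun t => Cmult c (Cmult (cexpi (IZR n * omega * t)) (h t)))) by (intros; ring).
  rewrite fcoef_scal. rewrite fcoef_shift. reflexivity.
  intros x. apply cont_Cmult. apply cont_e. apply Hh. Qed.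

Lemma fcoef_SF omega A N h m : Cont h ->
  fcoef omega (fun t => Cmult (SF omega A N t) (h t)) m = sym_psum N (fun n => Cmult (A n) (fcoef omega h (m - n))).
Proof. intros Hh. induction N.
  - rewrite sym_psum_0. unfold SF.
    rewrite (fcoef_ext _ _ (fun t => Cmult (Cmult (A 0%Z) (cexpi (IZR 0 * omega * t))) (h t))).
    rewrite fcoef_term by auto. ring.
    intros t. rewrite sym_psum_0. ring.
  - rewrite sym_psum_S. unfold SF.
    set (F := fun n t => Cmult (Cmult (A n) (cexpi (IZR n * omega * t))) (h t)).
    rewrite (fcoef_ext _ _ (fun t => Cplus (Cplus (Cmult (SF omega A N t) (h t)) (F (- Z.of_nat (S N))%Z t)) (F (Z.of_nat (S N)) t))).
    2:{ intros t. unfold F, SF. rewrite sym_psum_S. ring. }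
    assert (HF : forall n, Cont (F n)).
    { intros n x. unfold F. apply cont_Cmult. apply cont_Cmult. apply cont_const. apply cont_e. apply Hh. }
    assert (HS : Cont (fun t => Cmult (SF omega A N t) (h t))).
    { intros x. apply cont_Cmult. apply cont_SF. apply Hh. }
    rewrite fcoef_plus. rewrite fcoef_plus. rewrite IHN. unfold F. rewrite !fcoef_term by auto. reflexivity.
    exact HS. apply HF. intros x; apply cont_Cplus. apply HS. apply HF. apply HF.
Qed.

Lemma rsum_plus N f g : rsum N (fun n => f n + g n) = rsum N f + rsum N g.
Proof. induction N. reflexivity. rewrite !rsum_S, IHN. ring. Qed.

Lemma exp_le x y : x <= y -> exp x <= exp y.
Proof. intros H. destruct (Rle_lt_or_eq_dec x y H). left; apply exp_increasing; auto. rewrite e; lra. Qed.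

Lemma wt_conv chi m n : 0 <= chi ->
  wt chi n * wt chi (m - n) <= wt chi m * (2 * / (bracket n ^ 2) + 2 * / (bracket (m - n) ^ 2)).
Proof. intros Hc. unfold wt.
  pose proof (bracket_ge1 n) as Hx. pose proof (bracket_ge1 (m - n)) as Hy. pose proof (bracket_ge1 m) as Hz.
  pose proof (bracket_tri m n) as Ht.
  set (x := bracket n) in *. set (y := bracket (m - n)) in *. set (z := bracket m) in *.
  set (e1 := exp (- chi * IZR (Z.abs n))). set (e2 := exp (- chi * IZR (Z.abs (m - n)))).
  set (e3 := exp (- chi * IZR (Z.abs m))).
  assert (He : e1 * e2 <= e3).
  { unfold e1, e2, e3. rewrite <- exp_plus. apply exp_le.
    assert (IZR (Z.abs m) <= IZR (Z.abs n) + IZR (Z.abs (m - n))) by (rewrite <- plus_IZR; apply IZR_le; lia).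
    nra. }
  assert (He1 : 0 < e1) by apply exp_pos. assert (He2 : 0 < e2) by apply exp_pos.
  replace (e1 / x ^ 2 * (e2 / y ^ 2)) with ((e1 * e2) * / (x ^ 2 * y ^ 2)) by (field; repeat split; lra).
  replace (e3 / z ^ 2 * (2 * / x ^ 2 + 2 * / y ^ 2)) with ((e3 * ((2 * y ^ 2 + 2 * x ^ 2) / z ^ 2)) * / (x ^ 2 * y ^ 2)) by (field; repeat split; lra).
  apply Rmult_le_compat_r. left; apply Rinv_0_lt_compat; apply Rmult_lt_0_compat; apply pow_lt; lra.
  apply Rle_trans with e3; auto.
  rewrite <- (Rmult_1_r e3) at 1. apply Rmult_le_compat_l. nra.
  assert (Hz2 : 0 < z ^ 2) by (apply pow_lt; lra).
  apply (Rmult_le_reg_r (z ^ 2)). exact Hz2. unfold Rdiv. rewrite Rmult_assoc, Rinv_l, Rmult_1_r by lra.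
  assert (z * z <= (x + y) * (x + y)) by (apply Rmult_le_compat; lra). pose proof (pow2_ge_0 (x - y)). simpl. nra.
Qed.

Lemma step omega chi alpha A a h B beta :
  0 < omega -> 0 < chi -> 0 <= alpha -> has_fourier_series omega A a -> (forall n, Cmod (A n) <= alpha * wt chi n) ->
  Cont h -> Per omega h -> (forall t, Cmod (h t) <= B) -> 0 <= beta -> (forall j, Cmod (fcoef omega h j) <= beta * wt chi j) ->
  Cont (fun t => Cmult (a t) (h t)) /\ Per omega (fun t => Cmult (a t) (h t)) /\
  (forall t, Cmod (Cmult (a t) (h t)) <= 6 * alpha * B) /\
  forall m, Cmod (fcoef omega (fun t => Cmult (a t) (h t)) m) <= 24 * alpha * beta * wt chi m.
Proof. intros Ho Hc Hal HF HA Hh Hph HB Hbe Hfh.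
  assert (HB0 : 0 <= B) by (eapply Rle_trans; [apply Cmod_ge_0|apply (HB 0)]).
  assert (Ha := a_cont omega chi alpha A a Hc Hal HF HA).
  assert (Hah : Cont (fun t => Cmult (a t) (h t))) by (intros x; apply cont_Cmult; auto).
  split; [|split; [|split]].
  - exact Hah.
  - intros x. simpl. rewrite (a_per omega chi alpha A a Ho Hc Hal HF HA x), Hph. reflexivity.
  - intros t. rewrite Cmod_mult. apply Rmult_le_compat; auto using Cmod_ge_0.
    apply (a_bnd omega chi alpha A a Hc Hal HF HA).
  - intros m. apply (le_lim_N _ _ (2 * alpha * B)). apply Rmult_le_pos; lra.
    intros N HN.
    assert (HS : Cont (fun t => Cmult (SF omega A N t) (h t))) by (intros x; apply cont_Cmult; [apply cont_SF|auto]).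
    assert (Happ : Cmod (Cminus (fcoef omega (fun t => Cmult (a t) (h t)) m) (sym_psum N (fun n => Cmult (A n) (fcoef omega h (m - n))))) <= 2 * alpha / INR N * B).
    { rewrite <- fcoef_SF by auto. rewrite <- fcoef_minus by auto.
      apply fcoef_bound; auto. intros x; apply cont_Cminus; auto.
      intros t _. replace (Cminus (Cmult (a t) (h t)) (Cmult (SF omega A N t) (h t))) with (Cmult (Cminus (a t) (SF omega A N t)) (h t)) by ring.
      rewrite Cmod_mult. apply Rmult_le_compat; auto using Cmod_ge_0.
      apply (SF_approx omega chi alpha A a Hc Hal HF HA t N HN). }
    set (X := fcoef omega (fun t => Cmult (a t) (h t)) m) in *.
    set (Y := sym_psum N (fun n => Cmult (A n) (fcoef omega h (m - n)))) in *.
    replace X with (Cplus (Cminus X Y) Y) by ring.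
    eapply Rle_trans. apply Cmod_triangle.
    assert (HY : Cmod Y <= 24 * alpha * beta * wt chi m).
    { unfold Y. eapply Rle_trans. apply Cmod_sym_psum.
      eapply Rle_trans. apply rsum_le. intros n. rewrite Cmod_mult.
      apply Rmult_le_compat. apply Cmod_ge_0. apply Cmod_ge_0. apply HA. apply Hfh.
      eapply Rle_trans. apply rsum_le. intros n.
      replace (alpha * wt chi n * (beta * wt chi (m - n))) with ((alpha * beta) * (wt chi n * wt chi (m - n))) by ring.
      apply Rmult_le_compat_l. apply Rmult_le_pos; auto.
      apply (wt_conv chi m n). lra.
      rewrite rsum_scal, rsum_scal, rsum_plus, rsum_scal, rsum_scal.
      pose proof (window_sum6' N). pose proof (window_sum6 N m).
      pose proof (wt_pos chi m).
      assert (0 <= alpha * beta) by (apply Rmult_le_pos; auto).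
      assert (wt chi m * (2 * rsum N (fun n => / bracket n ^ 2) + 2 * rsum N (fun n => / bracket (m - n) ^ 2)) <= wt chi m * 24).
      { apply Rmult_le_compat_l; lra. }
      replace (24 * alpha * beta * wt chi m) with ((alpha * beta) * (wt chi m * 24)) by ring.
      apply Rmult_le_compat_l; auto. }
    unfold Rdiv in *. lra.
Qed.

Lemma T_pos omega : 0 < omega -> 0 < 2 * PI / omega.
Proof. intros. pose proof PI_RGT_0. apply Rdiv_lt_0_compat; lra. Qed.

Lemma Mean_eq omega g B : 0 < omega -> Cont g -> Per omega g -> (forall t, Cmod (g t) <= B) ->
  Mean g = fcoef omega g 0.
Proof. intros Ho Hc Hp HB.
  assert (HT := T_pos omega Ho).
  assert (Hre := mean_lim (fun s => Re (g s)) (2 * PI / omega) B HT (fun x => cont_Re g x (Hc x))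
     (fun x => f_equal Re (Hp x)) (fun x => Rle_trans _ _ _ (re_le_Cmod (g x)) (HB x))).
  assert (Him := mean_lim (fun s => Im (g s)) (2 * PI / omega) B HT (fun x => cont_Im g x (Hc x))
     (fun x => f_equal Im (Hp x))
     (fun x => Rle_trans _ _ _ (Rle_trans _ _ _ (Rmax_r _ _) (Rmax_Cmod (g x))) (HB x))).
  unfold Mean. rewrite (is_lim_unique _ _ _ Hre), (is_lim_unique _ _ _ Him). simpl real.
  rewrite fcoef_0 by auto. rewrite (C_eta (CInt g 0 (2 * PI / omega))).
  rewrite RInt_Re, RInt_Im by (apply ex_cont, Hc).
  unfold Cmult, RtoC; simpl. pose proof PI_RGT_0. f_equal; field; lra.
Qed.

Lemma b_props omega chi g Bg betag : 0 < omega -> 0 < chi -> Cont g -> Per omega g ->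
  (forall t, Cmod (g t) <= Bg) -> 0 <= betag -> (forall j, Cmod (fcoef omega g j) <= betag * wt chi j) ->
  Cont (fun t => CInt (fun s => Cminus (g s) (Mean g)) 0 t) /\
  Per omega (fun t => CInt (fun s => Cminus (g s) (Mean g)) 0 t) /\
  (forall t, Cmod (CInt (fun s => Cminus (g s) (Mean g)) 0 t) <= 2 * (2 * PI / omega) * Bg) /\
  (forall j, Cmod (fcoef omega (fun t => CInt (fun s => Cminus (g s) (Mean g)) 0 t) j)
       <= (betag / omega + 2 * (2 * PI / omega) * Bg) * wt chi j).
Proof. intros Ho Hchi Hc Hp HB Hbe Hfg.
  assert (HT := T_pos omega Ho). set (T := 2 * PI / omega) in *.
  assert (HB0 : 0 <= Bg) by (eapply Rle_trans; [apply Cmod_ge_0|apply (HB 0)]).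
  rewrite (Mean_eq omega g Bg Ho Hc Hp HB).
  set (c := fcoef omega g 0).
  assert (Hcb : Cmod c <= Bg) by (apply fcoef_bound; auto).
  set (gt := fun s => Cminus (g s) c).
  assert (Hgt : Cont gt) by (intros x; apply cont_Cminus; [apply Hc|apply cont_const]).
  assert (Hpgt : forall x, gt (x + T) = gt x) by (intros x; unfold gt; rewrite Hp; reflexivity).
  assert (Hbgt : forall t, Cmod (gt t) <= 2 * Bg).
  { intros t. unfold gt, Cminus. eapply Rle_trans. apply Cmod_triangle. rewrite Cmod_opp. pose proof (HB t). lra. }
  assert (HT0 : CInt gt 0 T = RtoC 0).
  { unfold gt. rewrite CInt_minus by (apply ex_cont; auto; intro; apply cont_const).
    unfold c. rewrite fcoef_0 by auto. fold T.
    unfold CInt at 2. rewrite (RInt_const (V:=C_R_CompleteNormedModule)).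
    destruct (CInt g 0 T) as [u v].
    unfold scal; simpl. unfold prod_scal; simpl. unfold scal; simpl. unfold mult; simpl.
    unfold Cminus, Cmult, Cplus, Copp, RtoC; simpl. unfold T. pose proof PI_RGT_0. f_equal; field; lra. }
  change (fun s => Cminus (g s) c) with gt.
  set (b := fun t => CInt gt 0 t).
  assert (Hbc : Cont b) by (apply cont_prim, Hgt).
  assert (Hbp : Per omega b).
  { intros x. unfold b. fold T. unfold CInt.
    rewrite <- (RInt_Chasles (V:=C_R_CompleteNormedModule) gt 0 x (x + T)) by (apply ex_cont; auto).
    rewrite (RInt_shift (V:=C_R_CompleteNormedModule) gt T x Hpgt) by (intros; apply ex_cont; auto).
    change (@RInt C_R_CompleteNormedModule gt 0 T) with (CInt gt 0 T). rewrite HT0. apply (plus_zero_r (G:=C_R_CompleteNormedModule)). }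
  assert (Hbb : forall t, Cmod (b t) <= 2 * T * Bg).
  { intros t. destruct (per_reduce b T HT Hbp t) as [y [Hy ->]].
    unfold b. eapply Rle_trans. apply (Cmod_CInt_le gt 0 y (2 * Bg)). lra. apply ex_cont; auto.
    intros; auto. nra. }
  split; [exact Hbc|split; [exact Hbp|split; [exact Hbb|]]].
  intros j. destruct (Z.eq_dec j 0) as [->|Hj].
  - rewrite wt_0, Rmult_1_r. apply Rle_trans with (2 * T * Bg). apply fcoef_bound; auto. 
    assert (0 <= betag / omega) by (apply Rdiv_le_0_compat; lra). lra.
  - pose proof (ibp omega gt j Ho Hgt HT0 Hj) as Hi. fold b in Hi.
    unfold gt in Hi. rewrite fcoef_minus in Hi by (auto; intro; apply cont_const).
    rewrite fcoef_const_nz in Hi by auto.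
    replace (Cminus (fcoef omega g j) (RtoC 0)) with (fcoef omega g j) in Hi by ring.
    assert (Hj1 : 1 <= Rabs (IZR j)) by (rewrite <- abs_IZR; apply IZR_le; lia).
    assert (Cmod (fcoef omega b j) * omega <= betag * wt chi j).
    { rewrite <- Hfg. rewrite <- Hi. pose proof (Cmod_ge_0 (fcoef omega b j)).
      replace (Cmod (fcoef omega b j) * (Rabs (IZR j) * omega)) with ((Cmod (fcoef omega b j) * omega) * Rabs (IZR j)) by ring.
      rewrite <- (Rmult_1_r (Cmod (fcoef omega b j) * omega)) at 1.
      apply Rmult_le_compat_l; auto. apply Rmult_le_pos; lra. }
    pose proof (wt_pos chi j).
    assert (Cmod (fcoef omega b j) <= betag / omega * wt chi j).
    { apply (Rmult_le_reg_r omega); auto. replace (betag / omega * wt chi j * omega) with (betag * wt chi j) by (field; lra). auto. }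
    assert (0 <= 2 * T * Bg * wt chi j) by (apply Rmult_le_pos; [nra|lra]). nra.
Qed.

Lemma prod_pos (alpha : nat -> R) s len : (forall l, (s <= l < s + len)%nat -> 0 < alpha l) ->
  0 < fold_right Rmult 1 (map alpha (seq s len)).
Proof. revert s. induction len; intros s H; simpl. lra.
  apply Rmult_lt_0_compat. apply H; lia. apply IHlen. intros; apply H; lia. Qed.

Lemma chain omega chi n : 0 < omega -> 0 < chi -> exists beta gam, 0 < beta /\ 0 < gam /\
  forall s (alpha : nat -> R) (A : nat -> Z -> C) (a : nat -> R -> C),
  (forall l, (s <= l <= s + n)%nat -> 0 < alpha l) ->
  (forall l, (s <= l <= s + n)%nat -> has_fourier_series omega (A l) (a l)) ->
  (forall l m, (s <= l <= s + n)%nat -> Cmod (A l m) <= alpha l * wt chi m) ->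
  Cont (Renorm (map a (seq s (S n)))) /\ Per omega (Renorm (map a (seq s (S n)))) /\
  (forall t, Cmod (Renorm (map a (seq s (S n))) t) <= gam * fold_right Rmult 1 (map alpha (seq s (S n)))) /\
  (forall m, Cmod (fcoef omega (Renorm (map a (seq s (S n)))) m) <= beta * fold_right Rmult 1 (map alpha (seq s (S n))) * wt chi m).
Proof. intros Ho Hchi. induction n.
  - exists 24, 6. split; [lra|split; [lra|]].
    intros s alpha A a Hal HF HA.
    change (Renorm (map a (seq s 1))) with (a s).
    change (fold_right Rmult 1 (map alpha (seq s 1))) with (alpha s * 1).
    assert (E : a s = fun t => Cmult (a s t) (RtoC 1)) by (apply functional_extensionality; intros; ring).
    rewrite E.
    assert (Hs : (s <= s <= s + 0)%nat) by lia.
    destruct (step omega chi (alpha s) (A s) (a s) (fun _ => RtoC 1) 1 1 Ho Hchi (Rlt_le _ _ (Hal s Hs)) (HF s Hs) (fun m => HA s m Hs))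
      as [H1 [H2 [H3 H4]]].
    + intros x; apply cont_const.
    + intros x; reflexivity.
    + intros t; rewrite Cmod_1; lra.
    + lra.
    + intros j. destruct (Z.eq_dec j 0) as [->|Hj].
      * rewrite fcoef_const_0, Cmod_1, wt_0 by auto. lra.
      * rewrite fcoef_const_nz, Cmod_0 by auto. pose proof (wt_pos chi j). lra.
    + split; [exact H1|split; [exact H2|split]].
      * intros t. rewrite Rmult_1_r. eapply Rle_trans. apply H3. lra.
      * intros m. eapply Rle_trans. apply H4. right; ring.
  - destruct IHn as [beta [gam [Hbe [Hga IH]]]].
    set (T := 2 * PI / omega).
    assert (HT : 0 < T) by (apply T_pos; auto).
    exists (24 * (beta / omega + 2 * T * gam)), (12 * T * gam).
    split. { assert (0 < beta / omega) by (apply Rdiv_lt_0_compat; lra). nra. }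
    split. { nra. }
    intros s alpha A a Hal HF HA.
    destruct (IH (S s) alpha A a) as [G1 [G2 [G3 G4]]].
    { intros; apply Hal; lia. } { intros; apply HF; lia. } { intros; apply HA; lia. }
    set (g := Renorm (map a (seq (S s) (S n)))) in *.
    set (P := fold_right Rmult 1 (map alpha (seq (S s) (S n)))) in *.
    assert (HP : 0 < P).
    { unfold P. apply prod_pos. intros; apply Hal; lia. }
    change (fold_right Rmult 1 (map alpha (seq s (S (S n))))) with (alpha s * P).
    change (Renorm (map a (seq s (S (S n))))) with (fun t => Cmult (a s t) (CInt (fun s0 => Cminus (g s0) (Mean g)) 0 t)).
    destruct (b_props omega chi g (gam * P) (beta * P) Ho Hchi G1 G2 G3 ltac:(nra) G4) as [B1 [B2 [B3 B4]]].
    assert (Hs : (s <= s <= s + S n)%nat) by lia.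
    assert (Hnn : 0 <= beta * P / omega + 2 * (2 * PI / omega) * (gam * P)).
    { apply Rplus_le_le_0_compat. apply Rdiv_le_0_compat. apply Rmult_le_pos; lra. lra.
      fold T. apply Rmult_le_pos. lra. apply Rmult_le_pos; lra. }
    destruct (step omega chi (alpha s) (A s) (a s) _ _ _ Ho Hchi (Rlt_le _ _ (Hal s Hs)) (HF s Hs) (fun m => HA s m Hs)
       B1 B2 B3 Hnn B4) as [H1 [H2 [H3 H4]]].
    split; [exact H1|split; [exact H2|split]].
    + intros t. eapply Rle_trans. apply H3. fold T. right; field; lra.
    + intros m. eapply Rle_trans. apply H4. fold T. right; field; lra.
Qed.

Theorem propositionB2 (k : nat) (omega chi : R) :
  (2 <= k)%nat -> 0 < omega -> 0 < chi ->
  exists beta : R, 0 < beta /\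
  forall (alpha : nat -> R) (A : nat -> Z -> C) (a : nat -> R -> C),
    (forall l, (1 <= l <= k)%nat -> 0 < alpha l) ->
    (forall l, (1 <= l <= k)%nat -> has_fourier_series omega (A l) (a l)) ->
    (forall l m, (1 <= l <= k)%nat ->
        Cmod (A l m) <= alpha l * exp (- chi * IZR (Z.abs m)) / (bracket m) ^ 2) ->
    forall m : Z,
      Cmod (fcoef omega (Renorm (map a (seq 1 k))) m)
        <= beta * fold_right Rmult 1 (map alpha (seq 1 k))
           * exp (- chi * IZR (Z.abs m)) / (bracket m) ^ 2.
Proof. intros Hk Ho Hchi. destruct k as [|n]. lia.
  destruct (chain omega chi n Ho Hchi) as [beta [gam [Hbe [Hga H]]]].
  exists beta. split; auto.
  intros alpha A a Hal HF HA m.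
  destruct (H 1%nat alpha A a) as [_ [_ [_ H4]]].
  { intros; apply Hal; lia. } { intros; apply HF; lia. }
  { intros l m0 Hl. unfold wt. unfold Rdiv. rewrite <- Rmult_assoc. apply HA. lia. }
  eapply Rle_trans. apply H4. unfold wt. right. unfold Rdiv. ring.
Qed.
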